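(* Let $A,B\in\mathcal{B}$ have nonzero diameters, and let $\varepsilon>0$ satisfy $2\varepsilon<\min\{\operatorname{diam}A,\operatorname{diam}B\}$. Then no $\varepsilon$-shortest curve connecting $A$ and $B$ passes through $\Delta_1$.
   Context: All metric spaces (with finite-valued metrics) are considered up to isometry. $\mathcal{GH}$ denotes the class (in the sense of von Neumann–Bernays–Gödel set theory) of representatives of isometry classes of all metric spaces, and $\mathcal{B}\subset\mathcal{GH}$ the subclass of bounded metric spaces. $d_{GH}$ is the Gromov–Hausdorff distance, with values in $[0,\infty]$: $d_{GH}(X,Y)$ is the infimum of $r$ such that there exist a metric space $Z$ and subsets $X',Y'\subset Z$ isometric to $X,Y$ with Hausdorff distance $d_H(X',Y')\le r$. Topology on the class: for each cardinal $n$, the subclass $\mathcal{GH}_n$ of spaces of cardinality at most $n$ is a set, endowed with the topology whose base consists of the open balls of $d_{GH}$. A map $f$ from a topological space $Z$ to $\mathcal{GH}$ is continuous if it is continuous as a map into $\mathcal{GH}_n$ for some (equivalently, every) cardinal $n$ with $f(Z)\subset\mathcal{GH}_n$. A continuous curve is a continuous map from a segment $[a,b]$. The length $|\gamma|$ of a continuous curve $\gamma\colon[a,b]\to\mathcal{GH}$ is the supremum of $\sum_i d_{GH}(\gamma(t_i),\gamma(t_{i+1}))$ over all partitions $a=t_1<\dots<t_k=b$. An $\varepsilon$-shortest curve connecting $A$ and $B$ is a continuous curve $\gamma$ with $\gamma(a)=A$, $\gamma(b)=B$ and $|\gamma|\le d_{GH}(A,B)+\varepsilon$. $\Delta_1$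 is the single-point metric space. *)

(* Defs.v *)
From Stdlib Require Import Reals List Lra.
From Coquelicot Require Import Coquelicot.
Open Scope R_scope.

Record MetricSpace : Type := {
  carrier :> Type;
  dist : carrier -> carrier -> R;
  dist_eq0 : forall x y, dist x y = 0 <-> x = y;
  dist_sym : forall x y, dist x y = dist y x;
  dist_tri : forall x y z, dist x z <= dist x y + dist y z
}.
Arguments dist {m} x y.

Definition iso_emb (X Z : MetricSpace) (f : X -> Z) : Prop :=
  forall x y, dist (f x) (f y) = dist x y.

(* isometry (X and Y represent the same point of GH) *)
Definition isometric (X Y : MetricSpace) : Prop :=
  exists f : X -> Y, iso_emb X Y f /\ forall y, exists x, f x = y.

Definition ms_bounded (X : MetricSpace) : Prop :=
  exists C, forall x y : X, dist x y <= C.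

Definition diam (X : MetricSpace) : Rbar :=
  Lub_Rbar (fun r => exists x y : X, r = dist x y).

Definition hausdorff (Z : MetricSpace) (A B : Z -> Prop) : Rbar :=
  Glb_Rbar (fun r => 0 < r /\
    (forall a, A a -> exists b, B b /\ dist a b < r) /\
    (forall b, B b -> exists a, A a /\ dist b a < r)).

Definition dGH (X Y : MetricSpace) : Rbar :=
  Glb_Rbar (fun r => exists (Z : MetricSpace) (f : X -> Z) (g : Y -> Z),
    iso_emb X Z f /\ iso_emb Y Z g /\
    Rbar_le (hausdorff Z (fun z => exists x, f x = z) (fun z => exists y, g y = z))
            (Finite r)).

Definition Delta1 : MetricSpace.
Proof.
  refine {| carrier := unit; dist := fun _ _ => 0 |}.
  - intros [] []; split; auto.
  - auto.
  - intros; lra.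
Defined.

Definition GH_continuous (a b : R) (gamma : R -> MetricSpace) : Prop :=
  forall t, a <= t <= b -> forall eps, 0 < eps -> exists delta, 0 < delta /\
    forall s, a <= s <= b -> Rabs (s - t) < delta ->
      Rbar_lt (dGH (gamma s) (gamma t)) (Finite eps).

(* partitions a = t_1 < ... < t_k = b, given as a list [t_2; ...; t_k] *)
Fixpoint incr_chain (t : R) (l : list R) : Prop :=
  match l with nil => True | s :: l' => t < s /\ incr_chain s l' end.

Fixpoint chain_sum (gamma : R -> MetricSpace) (t : R) (l : list R) : Rbar :=
  match l with
  | nil => Finite 0
  | s :: l' => Rbar_plus (dGH (gamma t) (gamma s)) (chain_sum gamma s l')
  end.

Definition curve_length (a b : R) (gamma : R -> MetricSpace) : Rbar :=
  Rbar_lub (fun S => exists l, incr_chain a l /\ last l a = b /\ S = chain_sum gamma a l).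

Definition eps_shortest (eps : R) (A B : MetricSpace) (a b : R)
    (gamma : R -> MetricSpace) : Prop :=
  a <= b /\ GH_continuous a b gamma /\
  isometric (gamma a) A /\ isometric (gamma b) B /\
  Rbar_le (curve_length a b gamma) (Rbar_plus (dGH A B) (Finite eps)).

(* Main.v *)
From Pilot Require Import Defs.
From Stdlib Require Import Reals Lra List.
From Coquelicot Require Import Coquelicot.
Open Scope R_scope.
Import Pilot.Defs.

Lemma L_glb_ge (E : R -> Prop) (c : R) :
  (forall r, E r -> c <= r) -> Rbar_le c (Glb_Rbar E).
Proof.
  intro H. destruct (Glb_Rbar_correct E) as [_ H2]. apply H2.
  intros r Hr. simpl. apply H; auto.
Qed.

Lemma L_glb_le (E : R -> Prop) (r : R) : E r -> Rbar_le (Glb_Rbar E) r.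
Proof. intro H. destruct (Glb_Rbar_correct E) as [H1 _]. apply H1; auto. Qed.

Lemma L_le_lim (G : Rbar) (x : R) :
  (forall r, x < r -> Rbar_le G r) -> Rbar_le G x.
Proof.
  intro H. destruct G as [g| |]; simpl.
  - apply Rnot_lt_le; intro Hl. specialize (H ((x+g)/2)). simpl in H.
    assert (g <= (x+g)/2) by (apply H; lra). lra.
  - specialize (H (x+1)); simpl in H; apply H; lra.
  - auto.
Qed.

Lemma L_lt_exists (E : R -> Prop) (r r' : R) :
  Rbar_le (Glb_Rbar E) r -> r < r' -> exists s, E s /\ s < r'.
Proof.
  intros H1 H2. apply Classical_Prop.NNPP; intro Hn.
  assert (Rbar_le r' (Glb_Rbar E)).
  { apply L_glb_ge. intros s Hs. apply Rnot_lt_le; intro; apply Hn; eauto. }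
  assert (Rbar_le r' r) by (eapply Rbar_le_trans; eauto). simpl in H0. lra.
Qed.

Lemma diam_ub (X : MetricSpace) (x y : X) : Rbar_le (dist x y) (diam X).
Proof. destruct (Lub_Rbar_correct (fun r => exists x y : X, r = dist x y)) as [H _].
  apply H; eauto. Qed.

Lemma diam_le (X : MetricSpace) (c : R) :
  (forall x y : X, dist x y <= c) -> Rbar_le (diam X) c.
Proof. intro H. destruct (Lub_Rbar_correct (fun r => exists x y : X, r = dist x y)) as [_ H2].
  apply H2. intros r [x [y ->]]. simpl; auto. Qed.

Lemma diam_gt (X : MetricSpace) (c : R) :
  Rbar_lt c (diam X) -> exists x y : X, c < dist x y.
Proof.
  intro H. apply Classical_Prop.NNPP; intro Hn.
  assert (Rbar_le (diam X) c).
  { apply diam_le. intros x y. apply Rnot_lt_le; intro; apply Hn; eauto. }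
  apply (Rbar_lt_not_le _ _ H H0).
Qed.

Lemma pt_dist (Y : MetricSpace) : isometric Y Delta1 -> forall y1 y2 : Y, dist y1 y2 = 0.
Proof. intros [f [Hf _]] y1 y2. rewrite <- Hf. reflexivity. Qed.

Lemma iso_transfer (X A : MetricSpace) : isometric X A ->
  forall a1 a2 : A, exists x1 x2 : X, dist x1 x2 = dist a1 a2.
Proof.
  intros [f [Hf Hs]] a1 a2. destruct (Hs a1) as [x1 <-]. destruct (Hs a2) as [x2 <-].
  exists x1, x2. symmetry. apply Hf.
Qed.

Lemma LB_core (X Y : MetricSpace) : (forall y1 y2 : Y, dist y1 y2 = 0) ->
  forall r, (exists (Z : MetricSpace) (f : X -> Z) (g : Y -> Z),
    iso_emb X Z f /\ iso_emb Y Z g /\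
    Rbar_le (hausdorff Z (fun z => exists x, f x = z) (fun z => exists y, g y = z)) (Finite r)) ->
  forall x1 x2 : X, dist x1 x2 <= 2 * r.
Proof.
  intros Hp r [Z [f [g [Hf [Hg Hh]]]]] x1 x2.
  apply Rnot_lt_le; intro Hlt.
  destruct (L_lt_exists _ r (dist x1 x2 / 2) Hh ltac:(lra)) as [s [[Hs0 [H1 _]] Hs]].
  destruct (H1 (f x1) (ex_intro _ x1 eq_refl)) as [b1 [[y1 <-] Hd1]].
  destruct (H1 (f x2) (ex_intro _ x2 eq_refl)) as [b2 [[y2 <-] Hd2]].
  pose proof (dist_tri Z (f x1) (g y1) (f x2)).
  pose proof (dist_tri Z (g y1) (g y2) (f x2)).
  rewrite Hf in H. rewrite Hg, Hp in H0. rewrite (dist_sym Z (g y2)) in H0. lra.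
Qed.

Lemma LB_core' (X Y : MetricSpace) : (forall y1 y2 : Y, dist y1 y2 = 0) ->
  forall r, (exists (Z : MetricSpace) (g : Y -> Z) (f : X -> Z),
    iso_emb Y Z g /\ iso_emb X Z f /\
    Rbar_le (hausdorff Z (fun z => exists y, g y = z) (fun z => exists x, f x = z)) (Finite r)) ->
  forall x1 x2 : X, dist x1 x2 <= 2 * r.
Proof.
  intros Hp r [Z [g [f [Hg [Hf Hh]]]]] x1 x2.
  apply Rnot_lt_le; intro Hlt.
  destruct (L_lt_exists _ r (dist x1 x2 / 2) Hh ltac:(lra)) as [s [[Hs0 [_ H1]] Hs]].
  destruct (H1 (f x1) (ex_intro _ x1 eq_refl)) as [b1 [[y1 <-] Hd1]].
  destruct (H1 (f x2) (ex_intro _ x2 eq_refl)) as [b2 [[y2 <-] Hd2]].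
  pose proof (dist_tri Z (f x1) (g y1) (f x2)).
  pose proof (dist_tri Z (g y1) (g y2) (f x2)).
  rewrite Hf in H. rewrite Hg, Hp in H0. rewrite (dist_sym Z (g y2)) in H0. lra.
Qed.

Lemma dist_nonneg (X : MetricSpace) (a b : X) : 0 <= dist a b.
Proof. pose proof (dist_tri X a b a); rewrite (dist_sym X b a) in *;
  pose proof (proj2 (dist_eq0 X a a) eq_refl); lra. Qed.

Section Glue.
Variables (A B : MetricSpace) (C : R).
Hypothesis HC : 0 < C.
Hypothesis HA : forall x y : A, dist x y <= C.
Hypothesis HB : forall x y : B, dist x y <= C.

Definition gd (p q : A + B) : R :=
  match p, q with
  | inl a, inl a' => dist a a'
  | inr b, inr b' => dist b b'
  | _, _ => C / 2
  end.

Definition Glue : MetricSpace.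
Proof.
  refine {| carrier := (A + B)%type; dist := gd |}.
  - intros [x|x] [y|y]; simpl.
    + rewrite dist_eq0. split; intro H; [subst; auto | inversion H; auto].
    + split; intro H; [lra | discriminate].
    + split; intro H; [lra | discriminate].
    + rewrite dist_eq0. split; intro H; [subst; auto | inversion H; auto].
  - intros [x|x] [y|y]; simpl; auto using dist_sym.
  - intros [x|x] [y|y] [z|z]; simpl; try apply dist_tri;
    try pose proof (dist_nonneg _ x y); try pose proof (dist_nonneg _ y z);
    try pose proof (HA x z); try pose proof (HB x z); lra.
Defined.
End Glue.


Lemma UB (A B : MetricSpace) (C : R) (HC : 0 < C)
  (HA : forall x y : A, dist x y <= C) (HB : forall x y : B, dist x y <= C)
  (a0 : A) (b0 : B) : Rbar_le (dGH A B) (C / 2).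
Proof.
  apply L_le_lim. intros r Hr. apply L_glb_le.
  exists (Glue A B C HC HA HB), inl, inr.
  split; [intros x y; reflexivity|]. split; [intros x y; reflexivity|].
  apply L_glb_le. split; [lra|]. split.
  - intros z [x <-]. exists (inr b0). split; [eauto|]. simpl. lra.
  - intros z [y <-]. exists (inl a0). split; [eauto|]. simpl. lra.
Qed.

Lemma diam_fin (X : MetricSpace) (eps : R) : ms_bounded X -> Rbar_lt eps (diam X) ->
  exists d, diam X = Finite d.
Proof.
  intros [c Hc] H. pose proof (diam_le X c Hc).
  destruct (diam X); simpl in *; eauto; contradiction.
Qed.

Theorem lemma5 (A B : MetricSpace) (eps : R) :
  ms_bounded A -> ms_bounded B ->
  diam A <> Finite 0 -> diam B <> Finite 0 ->
  0 < eps ->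
  Rbar_lt (Finite (2 * eps)) (Rbar_min (diam A) (diam B)) ->
  forall (a b : R) (gamma : R -> MetricSpace),
    eps_shortest eps A B a b gamma ->
    forall t, a <= t <= b -> ~ isometric (gamma t) Delta1.
Proof.
  intros HbA HbB _ _ Heps Hmin a b gamma [Hab [_ [IA [IB Hlen]]]] t Ht Hpt.
  assert (HA2 : Rbar_lt (2*eps) (diam A)) by
    (eapply Rbar_lt_le_trans; [apply Hmin | apply Rbar_min_l]).
  assert (HB2 : Rbar_lt (2*eps) (diam B)) by
    (eapply Rbar_lt_le_trans; [apply Hmin | apply Rbar_min_r]).
  destruct (diam_fin A _ HbA HA2) as [dA EA].
  destruct (diam_fin B _ HbB HB2) as [dB EB].
  rewrite EA in HA2. rewrite EB in HB2. simpl in HA2, HB2.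
  assert (HAd : forall x y : A, dist x y <= dA).
  { intros x y. pose proof (diam_ub A x y). rewrite EA in H. exact H. }
  assert (HBd : forall x y : B, dist x y <= dB).
  { intros x y. pose proof (diam_ub B x y). rewrite EB in H. exact H. }
  destruct (diam_gt A (2*eps)) as [a1 [a2 Ha12]]; [rewrite EA; exact HA2|].
  destruct (diam_gt B (2*eps)) as [b1 [b2 Hb12]]; [rewrite EB; exact HB2|].
  destruct (Req_dec t a) as [-> | Hta].
  { destruct (iso_transfer _ _ IA a1 a2) as [x1 [x2 Hx]].
    rewrite (pt_dist _ Hpt) in Hx. lra. }
  destruct (Req_dec t b) as [-> | Htb].
  { destruct (iso_transfer _ _ IB b1 b2) as [x1 [x2 Hx]].
    rewrite (pt_dist _ Hpt) in Hx. lra. }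
  set (C := Rmax dA dB).
  assert (HC : 0 < C) by (unfold C; pose proof (Rmax_l dA dB); lra).
  pose proof (UB A B C HC (fun x y => Rle_trans _ _ _ (HAd x y) (Rmax_l _ _))
                          (fun x y => Rle_trans _ _ _ (HBd x y) (Rmax_r _ _)) a1 b1) as HUB.
  assert (L1 : Rbar_le (dA / 2) (dGH (gamma a) (gamma t))).
  { apply L_glb_ge. intros r Hr.
    assert (Rbar_le (diam A) (2 * r)).
    { apply diam_le. intros x y. destruct (iso_transfer _ _ IA x y) as [x1 [x2 <-]].
      apply (LB_core _ _ (pt_dist _ Hpt) r Hr). }
    rewrite EA in H. simpl in H. lra. }
  assert (L2 : Rbar_le (dB / 2) (dGH (gamma t) (gamma b))).
  { apply L_glb_ge. intros r Hr.
    assert (Rbar_le (diam B) (2 * r)).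
    { apply diam_le. intros x y. destruct (iso_transfer _ _ IB x y) as [x1 [x2 <-]].
      apply (LB_core' _ _ (pt_dist _ Hpt) r Hr). }
    rewrite EB in H. simpl in H. lra. }
  assert (Hch : Rbar_le (chain_sum gamma a (t :: b :: nil)) (curve_length a b gamma)).
  { unfold curve_length, Rbar_lub. apply (proj1 (proj2_sig (Rbar_ex_lub _))). exists (t :: b :: nil).
    simpl. split; [split; [lra | split; [lra | exact I]] | auto]. }
  simpl in Hch.
  assert (Hs : Rbar_le (Rbar_plus (dA/2) (Rbar_plus (dB/2) 0))
     (Rbar_plus (dGH (gamma a) (gamma t)) (Rbar_plus (dGH (gamma t) (gamma b)) 0))).
  { apply Rbar_plus_le_compat; auto. apply Rbar_plus_le_compat; auto. apply Rbar_le_refl. }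
  assert (Hu : Rbar_le (Rbar_plus (dGH A B) eps) (Rbar_plus (C/2) eps)).
  { apply Rbar_plus_le_compat; auto. apply Rbar_le_refl. }
  pose proof (Rbar_le_trans _ _ _ (Rbar_le_trans _ _ _ (Rbar_le_trans _ _ _ Hs Hch) Hlen) Hu).
  simpl in H.
  unfold C in H. destruct (Rle_dec dA dB).
  - rewrite Rmax_right in H by lra. lra.
  - rewrite Rmax_left in H by lra. lra.
Qed.
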